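(* Let $\alpha_1=\sqrt{-106+34\sqrt{19}}$, $\alpha_2=-10+10\sqrt{19}$, $\alpha_3=16-16\sqrt{19}$, $\alpha_4=-13+3\sqrt{19}$, $\alpha_5=\sqrt{-77798+1162\sqrt{4691}}$, $\alpha_6=-\frac{354}{5}+\frac{6\sqrt{4691}}{5}$, $\alpha_7=-\frac{2183}{35}+\frac{27}{35}\sqrt{4691}$. Each of the following systems has an isochronous center at the origin $O$ with zero Urabe function (in systems with $\pm,\mp$, upper signs throughout or lower signs throughout): (i) $\dot x=-y+(-2+2\sqrt{19})x^2y+x^2-(-2+2\sqrt{19})x^4$, $\dot y=x\pm\alpha_1y^2-2xy\mp\frac{\alpha_1}{2}x^2+\alpha_2xy^2\mp2\alpha_1x^2y+\alpha_4x^3+\alpha_3x^3y\pm4\alpha_1x^4$; (ii) for every $a\in\mathbb R$: $\dot x=-y+axy+\frac{15}{8}a^2x^2y+x^2-ax^3-\frac{15}{8}a^2x^4$, $\dot y=x-\frac a2y^2-2xy+\frac{3a}{4}x^2+\frac{15}{4}a^2xy^2+3ax^2y+2x^3-\frac{15}{4}a^2x^3y-\frac{5a}{2}x^4$; (iii) $\dot x=-y\mp\frac{2}{35}\alpha_5xy+\alpha_6x^2y+x^2\pm\frac2{35}\alpha_5x^3-\alpha_6x^4$, $\dot y=x\pm\frac{\alpha_5}{35}y^2-2xy\mp\frac3{70}\alpha_5x^2+5\alpha_6xy^2\mp\frac6{35}\alpha_5x^2y+\alpha_7x^3-8\alpha_6x^3y\pm\frac{38}{35}\alpha_5x^4$.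
   Context: For a real planar polynomial system $\dot x=-y+A(x,y)$, $\dot y=x+B(x,y)$, with $A,B$ polynomials having no terms of degree $<2$, the origin $O$ is an isochronous center if there is a punctured neighborhood of $O$ in which every orbit is a closed orbit surrounding $O$ and all these orbits have the same period. Zero Urabe function: write the system as $\dot x=p_0(x)+p_1(x)y$, $\dot y=q_0(x)+q_1(x)y+q_2(x)y^2$ ($p_0(0)=q_0(0)=0$, $p_1(0)\ne0$), where it holds that $-\frac{p_1'p_0}{p_1}+q_1+p_0'-\frac{2q_2p_0}{p_1}\equiv0$. Put $f=-\frac{q_2+p_1'}{p_1}$, $g=-\frac{q_2p_0^2}{p_1}+q_1p_0-p_1q_0$ (the change $z=p_0+p_1y$ gives $\dot x=z$, $\dot z=-g(x)-f(x)z^2$), $F(x)=\int_0^xf$, and $\xi$ near $0$ by $\frac12\xi(x)^2=\int_0^xg(s)e^{2F(s)}ds$, $x\xi(x)>0$ for $x\ne0$. The Urabe function of an isochronous center is the odd analytic $h$ with $\frac{\xi(x)}{1+h(\xi(x))}=g(x)e^{F(x)}$; ''zero Urabe function'' means $h\equiv0$, i.e. $\xi(x)=g(x)e^{F(x)}$ near $0$. *)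

(* Defs.v *)
From Stdlib Require Import Reals Lra ClassicalEpsilon.
Open Scope R_scope.

(* Definite Riemann integral  \int_a^b f  (chosen via epsilon; it is the
   value of RiemannInt for any integrability proof, when f is integrable). *)
Definition Rint (f : R -> R) (a b : R) : R :=
  epsilon (inhabits 0)
    (fun v => exists pr : Riemann_integrable f a b, RiemannInt pr = v).

Definition is_solution (P Q : R -> R -> R) (x y : R -> R) : Prop :=
  forall t, derivable_pt_lim x t (P (x t) (y t)) /\
            derivable_pt_lim y t (Q (x t) (y t)).

Definition closed_orbit_of_period (x y : R -> R) (T : R) : Prop :=
  0 < T /\
  (forall t, x (t + T) = x t /\ y (t + T) = y t) /\
  (forall s, 0 < s < T -> ~ (x s = x 0 /\ y s = y 0)).

(* The orbit surrounds the origin: it avoids O and separates O from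
   infinity (every continuous path from O to a point farther away than
   the whole orbit meets the orbit). *)
Definition surrounds_origin (x y : R -> R) : Prop :=
  (forall t, ~ (x t = 0 /\ y t = 0)) /\
  forall c1 c2 : R -> R, continuity c1 -> continuity c2 ->
    c1 0 = 0 -> c2 0 = 0 ->
    (forall t, x t ^ 2 + y t ^ 2 < c1 1 ^ 2 + c2 1 ^ 2) ->
    exists s t, 0 <= s <= 1 /\ c1 s = x t /\ c2 s = y t.

Definition isochronous_center (P Q : R -> R -> R) : Prop :=
  exists r T, 0 < r /\ 0 < T /\
    forall x0 y0, 0 < x0 ^ 2 + y0 ^ 2 < r ^ 2 ->
      (exists x y, is_solution P Q x y /\ x 0 = x0 /\ y 0 = y0) /\
      (forall x y, is_solution P Q x y -> x 0 = x0 -> y 0 = y0 ->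
         closed_orbit_of_period x y T /\ surrounds_origin x y).

(* The system is written as
   x' = p0(x) + p1(x) y,  y' = q0(x) + q1(x) y + q2(x) y^2,  with
   p0(0) = q0(0) = 0, p1(0) <> 0 and the standing identity
   -p1' p0/p1 + q1 + p0' - 2 q2 p0/p1 = 0; then with
   f = -(q2+p1')/p1,  g = -q2 p0^2/p1 + q1 p0 - p1 q0,  F = int_0^x f,
   xi is defined near 0 by  xi^2/2 = int_0^x g e^{2F},  x xi(x) > 0 (x<>0);
   zero Urabe function means xi(x) = g(x) e^{F(x)} near 0, i.e. the function
   g e^F satisfies the (uniquely determining) defining property of xi. *)
Definition zero_urabe_function (P Q : R -> R -> R) : Prop :=
  exists p0 p1 q0 q1 q2 dp0 dp1 : R -> R,
    (forall x y, P x y = p0 x + p1 x * y) /\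
    (forall x y, Q x y = q0 x + q1 x * y + q2 x * y ^ 2) /\
    p0 0 = 0 /\ q0 0 = 0 /\ p1 0 <> 0 /\
    (forall x, derivable_pt_lim p0 x (dp0 x)) /\
    (forall x, derivable_pt_lim p1 x (dp1 x)) /\
    (forall x, p1 x <> 0 ->
       - dp1 x * p0 x / p1 x + q1 x + dp0 x - 2 * q2 x * p0 x / p1 x = 0) /\
    let f := fun x => - (q2 x + dp1 x) / p1 x in
    let g := fun x => - q2 x * p0 x ^ 2 / p1 x + q1 x * p0 x - p1 x * q0 x in
    let F := fun x => Rint f 0 x in
    exists delta, 0 < delta /\
      forall x, Rabs x < delta ->
        (x <> 0 -> 0 < x * (g x * exp (F x))) /\
        / 2 * (g x * exp (F x)) ^ 2 = Rint (fun s => g s * exp (2 * F s)) 0 x.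

Definition isochronous_zero_urabe (P Q : R -> R -> R) : Prop :=
  isochronous_center P Q /\ zero_urabe_function P Q.

(* Main.v *)
Require Import Defs.
From Stdlib Require Import Reals Lra Lia Psatz ClassicalEpsilon Classical FunctionalExtensionality Ranalysis5 Ratan Nsatz List.
Open Scope R_scope.

Lemma cont_eps f x : continuity_pt f x -> forall e, 0 < e ->
  exists d, 0 < d /\ forall y, Rabs (y - x) < d -> Rabs (f y - f x) < e.
Proof.
  intros H e He. unfold continuity_pt, continue_in, limit1_in, limit_in in H.
  destruct (H e He) as [d [Hd Hy]]. exists d; split; auto.
  intros y Hyd. destruct (Req_dec y x) as [->|Hne].
  - replace (f x - f x) with 0 by ring. rewrite Rabs_R0; auto.
  - apply (Hy y). split. split. exact I. auto. simpl. unfold Rdist. auto.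
Qed.

Lemma lt_near f x K : continuity_pt f x -> f x < K ->
  exists d, 0 < d /\ forall y, Rabs (y - x) < d -> f y < K.
Proof.
  intros H HK. destruct (cont_eps f x H (K - f x)) as [d [Hd Hy]]; [lra|].
  exists d; split; auto. intros y Hyx. specialize (Hy y Hyx).
  apply Rabs_def2 in Hy. lra.
Qed.

Lemma closure_le f x K : continuity_pt f x ->
  (forall d, 0 < d -> exists y, Rabs (y - x) < d /\ f y <= K) -> f x <= K.
Proof.
  intros H Hc. destruct (Rle_dec (f x) K) as [|Hn]; auto.
  destruct (cont_eps f x H (f x - K)) as [d [Hd Hy]]; [lra|].
  destruct (Hc d Hd) as [y [Hyx Hfy]]. specialize (Hy y Hyx).
  apply Rabs_def2 in Hy. lra.
Qed.

Lemma cont_abs f x : continuity_pt f x -> continuity_pt (fun y => Rabs (f y)) x.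
Proof. intro H. exact (continuity_pt_comp f Rabs x H (Rcontinuity_abs (f x))). Qed.

Lemma deriv_local f g x l d : 0 < d -> (forall y, Rabs (y - x) < d -> f y = g y) ->
  derivable_pt_lim f x l -> derivable_pt_lim g x l.
Proof.
  intros Hd Heq H eps He. destruct (H eps He) as [del Hdel].
  assert (Hp : 0 < Rmin del d) by (apply Rmin_pos; [apply cond_pos|lra]).
  exists (mkposreal _ Hp). intros h Hh0 Hh. simpl in Hh.
  rewrite <- (Heq (x + h)), <- (Heq x).
  - apply Hdel; auto. apply Rlt_le_trans with (1 := Hh). apply Rmin_l.
  - replace (x - x) with 0 by ring. rewrite Rabs_R0. lra.
  - replace (x + h - x) with h by ring. apply Rlt_le_trans with (1 := Hh). apply Rmin_r.
Qed.

Lemma deriv_const_interval e a b : a <= b ->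
  (forall t, a <= t <= b -> derivable_pt_lim e t 0) -> forall t, a <= t <= b -> e t = e a.
Proof.
  intros Hab Hd t Ht.
  assert (pr : forall x, a < x < b -> derivable_pt e x).
  { intros x Hx. exists 0. apply Hd. lra. }
  assert (H := null_derivative_loc e a b pr).
  apply H; auto.
  - intros x Hx. apply derivable_continuous_pt. exists 0. apply Hd; auto.
  - intros x P. apply derive_pt_eq_0. apply Hd. lra.
Qed.

Lemma deriv_const_global e : (forall t, derivable_pt_lim e t 0) -> forall t, e t = e 0.
Proof.
  intros Hd t. destruct (Rle_dec 0 t).
  - apply (deriv_const_interval e 0 t); auto; lra.
  - symmetry. apply (deriv_const_interval e t 0); auto; lra.
Qed.

Lemma Rint_val f a b (pr : Riemann_integrable f a b) : Rint f a b = RiemannInt pr.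
Proof.
  unfold Rint.
  destruct (epsilon_spec (inhabits 0) (fun v => exists pr : Riemann_integrable f a b, RiemannInt pr = v))
    as [pr' Hpr'].
  - exists (RiemannInt pr). exists pr. reflexivity.
  - rewrite <- Hpr'. apply RiemannInt_P5.
Qed.

Lemma integ_cont f a b : (forall y, Rmin a b <= y <= Rmax a b -> continuity_pt f y) ->
  Riemann_integrable f a b.
Proof.
  intros H. destruct (Rle_dec a b).
  - apply continuity_implies_RiemannInt; auto. intros y Hy; apply H.
    rewrite Rmin_left, Rmax_right; lra.
  - apply RiemannInt_P1. apply continuity_implies_RiemannInt; [lra|].
    intros y Hy; apply H. rewrite Rmin_right, Rmax_left; lra.
Qed.

Lemma Rint_zero f : Rint f 0 0 = 0.
Proof. rewrite (Rint_val f 0 0 (RiemannInt_P7 f 0)). apply RiemannInt_P9. Qed.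

Lemma Rint_deriv f c x : 0 < c -> (forall y, -c <= y <= c -> continuity_pt f y) ->
  -c < x < c -> derivable_pt_lim (fun y => Rint f 0 y) x (f x).
Proof.
  intros Hc C0 Hx.
  assert (Hle : -c <= c) by lra.
  set (prim := primitive Hle (FTC_P1 Hle C0)).
  assert (Hp := @RiemannInt_P27 f (-c) c x Hle C0 Hx).
  fold prim in Hp.
  assert (Hp2 : derivable_pt_lim (fun y => prim y - prim 0) x (f x - 0)).
  { apply (derivable_pt_lim_minus prim (fun _ => prim 0)); auto. apply derivable_pt_lim_const. }
  replace (f x) with (f x - 0) by ring.
  apply (deriv_local (fun y => prim y - prim 0) _ x _ (Rmin (c - x) (x + c))); [apply Rmin_pos; lra| |exact Hp2].
  intros y Hy.
  assert (Hy1 : Rabs (y - x) < c - x) by (eapply Rlt_le_trans; [exact Hy| apply Rmin_l]).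
  assert (Hy2 : Rabs (y - x) < x + c) by (eapply Rlt_le_trans; [exact Hy| apply Rmin_r]).
  apply Rabs_def2 in Hy1. apply Rabs_def2 in Hy2.
  assert (Hval : forall z (H1 : -c <= z) (H2 : z <= c), prim z = RiemannInt (FTC_P1 Hle C0 H1 H2)).
  { intros z H1 H2. unfold prim, primitive.
    destruct (Rle_dec (-c) z) as [r|n]; [|contradiction]. destruct (Rle_dec z c) as [r0|n0]; [|contradiction].
    apply RiemannInt_P5. }
  assert (Hy0 : -c <= y) by lra. assert (Hyc : y <= c) by lra.
  assert (H00 : -c <= 0) by lra. assert (H0c : 0 <= c) by lra.
  rewrite (Hval y Hy0 Hyc), (Hval 0 H00 H0c).
  assert (pr : Riemann_integrable f 0 y).
  { apply integ_cont. intros z Hz. apply C0. split.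
    - apply Rle_trans with (2 := proj1 Hz). unfold Rmin; destruct (Rle_dec 0 y); lra.
    - apply Rle_trans with (1 := proj2 Hz). unfold Rmax; destruct (Rle_dec 0 y); lra. }
  rewrite (Rint_val f 0 y pr).
  rewrite <- (RiemannInt_P26 (FTC_P1 Hle C0 H00 H0c) pr (FTC_P1 Hle C0 Hy0 Hyc)). ring.
Qed.

Lemma first_exit (A : R -> Prop) L : 0 < L -> A 0 -> ~ A L ->
  (forall s, 0 <= s <= L -> A s -> exists e, 0 < e /\ forall s', Rabs (s' - s) < e -> A s') ->
  exists s, 0 < s <= L /\ (forall r, 0 <= r < s -> A r) /\ ~ A s.
Proof.
  intros HL HA0 HAL Hop.
  set (E := fun s => 0 <= s <= L /\ forall r, 0 <= r <= s -> A r).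
  assert (Hb : bound E). { exists L. intros s [Hs _]. lra. }
  assert (He : exists s, E s). { exists 0. split. lra. intros r Hr. replace r with 0 by lra. auto. }
  destruct (completeness E Hb He) as [m [Hub Hlub]].
  assert (HmL : m <= L). { apply Hlub. intros s [Hs _]. lra. }
  assert (Hbelow : forall r, 0 <= r < m -> A r).
  { intros r Hr. apply NNPP. intro Hn.
    assert (Hr' : is_upper_bound E r).
    { intros s [Hs Hs2]. destruct (Rle_dec s r) as [|Hsr]; auto.
      exfalso. apply Hn. apply Hs2. lra. }
    specialize (Hlub r Hr'). lra. }
  assert (Hm0 : 0 < m).
  { destruct (Hop 0 ltac:(lra) HA0) as [e [He0 He']].
    assert (E (Rmin (e/2) L)).
    { split. split. apply Rmin_glb; lra. apply Rmin_r.
      intros r Hr. apply He'. rewrite Rminus_0_r, Rabs_right by lra.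
      assert (Rmin (e/2) L <= e/2) by apply Rmin_l. lra. }
    specialize (Hub _ H). assert (0 < Rmin (e/2) L) by (apply Rmin_pos; lra). lra. }
  exists m. split. lra. split. auto.
  intro HAm. destruct (Hop m ltac:(lra) HAm) as [e [He0 He']].
  assert (HE2 : E (Rmin L (m + e/2))).
  { split. split. apply Rmin_glb; lra. apply Rmin_l.
    intros r Hr. destruct (Rlt_dec r m). apply Hbelow; lra.
    apply He'. assert (Rmin L (m + e/2) <= m + e/2) by apply Rmin_r.
    rewrite Rabs_right; lra. }
  specialize (Hub _ HE2). unfold Rmin in Hub. destruct (Rle_dec L (m + e/2)).
  - assert (m = L) by lra. subst m. contradiction.
  - lra.
Qed.

Lemma trap (w e : R -> R) h :
  (forall t, continuity_pt w t) ->
  (forall t, Rabs (w t) <= h -> continuity_pt e t) ->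
  (forall t, Rabs (w t) <= h -> e t = e 0 -> Rabs (w t) < h) ->
  (forall T, 0 <= T -> (forall r, -T <= r <= T -> Rabs (w r) < h) ->
      forall r, -T <= r <= T -> e r = e 0) ->
  Rabs (w 0) < h -> forall t, Rabs (w t) < h.
Proof.
  intros Hw He Hgap Hloc H0 t0. apply NNPP. intro Hn.
  assert (Ht0 : t0 <> 0). { intro; subst; contradiction. }
  set (A := fun s => Rabs (w s) < h /\ Rabs (w (-s)) < h).
  assert (HL : 0 < Rabs t0) by (apply Rabs_pos_lt; auto).
  destruct (first_exit A (Rabs t0) HL) as [s [Hs [Hbel HnA]]].
  - split. auto. rewrite Ropp_0; auto.
  - intros [H1 H2]. unfold Rabs in H1, H2. destruct (Rcase_abs t0).
    + rewrite Ropp_involutive in H2. contradiction.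
    + contradiction.
  - intros s Hs [H1 H2].
    destruct (cont_eps w s (Hw s) (h - Rabs (w s))) as [d1 [Hd1 Hd1']]; [lra|].
    destruct (cont_eps w (-s) (Hw (-s)) (h - Rabs (w (-s)))) as [d2 [Hd2 Hd2']]; [lra|].
    exists (Rmin d1 d2). split. apply Rmin_pos; auto.
    intros s' Hs'. split.
    + assert (Rabs (w s' - w s) < h - Rabs (w s)).
      { apply Hd1'. eapply Rlt_le_trans; [exact Hs'| apply Rmin_l]. }
      assert (Rabs (w s') <= Rabs (w s) + Rabs (w s' - w s)).
      { replace (w s') with (w s + (w s' - w s)) at 1 by ring. apply Rabs_triang. }
      lra.
    + assert (Rabs (w (-s') - w (-s)) < h - Rabs (w (-s))).
      { apply Hd2'. replace (-s' - -s) with (-(s'-s)) by ring. rewrite Rabs_Ropp.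
        eapply Rlt_le_trans; [exact Hs'| apply Rmin_r]. }
      assert (Rabs (w (-s')) <= Rabs (w (-s)) + Rabs (w (-s') - w (-s))).
      { replace (w (-s')) with (w (-s) + (w (-s') - w (-s))) at 1 by ring. apply Rabs_triang. }
      lra.
  - assert (Hin : forall r, Rabs r < s -> Rabs (w r) < h).
    { intros r Hr. destruct (Rle_dec 0 r).
      + rewrite Rabs_right in Hr by lra. apply (Hbel r). lra.
      + rewrite Rabs_left in Hr by lra. replace r with (- (-r)) by ring. apply (Hbel (-r)). lra. }
    assert (Hein : forall r, Rabs r < s -> e r = e 0).
    { intros r Hr. apply (Hloc (Rabs r)). apply Rabs_pos.
      intros r' Hr'. apply Hin. apply Rle_lt_trans with (2 := Hr). apply Rabs_le. lra.
      split. apply Rle_trans with (- Rabs r). apply Ropp_le_contravar; right; reflexivity.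
      apply Ropp_le_cancel. rewrite Ropp_involutive. rewrite <- Rabs_Ropp. apply RRle_abs. apply RRle_abs. }
    assert (Happ : forall z, Rabs z = s -> forall d, 0 < d -> exists y, Rabs (y - z) < d /\ Rabs y < s).
    { intros z Hz d Hd. set (k := Rmin d s / 2).
      assert (Hk : 0 < k) by (unfold k; assert (0 < Rmin d s) by (apply Rmin_pos; lra); lra).
      assert (Hk2 : k < d) by (unfold k; assert (Rmin d s <= d) by apply Rmin_l; lra).
      assert (Hk3 : k < s) by (unfold k; assert (Rmin d s <= s) by apply Rmin_r; lra).
      destruct (Rle_dec 0 z).
      - rewrite Rabs_right in Hz by lra. exists (z - k). split.
        replace (z - k - z) with (-k) by ring. rewrite Rabs_Ropp, Rabs_right; lra.
        rewrite Rabs_right; lra.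
      - rewrite Rabs_left in Hz by lra. exists (z + k). split.
        replace (z + k - z) with k by ring. rewrite Rabs_right; lra.
        rewrite Rabs_left; lra. }
    assert (Hfix : forall z, Rabs z = s -> Rabs (w z) < h).
    { intros z Hz.
      assert (Hle : Rabs (w z) <= h).
      { apply (closure_le (fun y => Rabs (w y))). apply cont_abs, Hw.
        intros d Hd. destruct (Happ z Hz d Hd) as [y [Hy1 Hy2]]. exists y. split; auto.
        left. apply Hin; auto. }
      apply Hgap; auto.
      assert (Hc : continuity_pt e z) by auto.
      apply Rle_antisym.
      - apply (closure_le e z). auto. intros d Hd. destruct (Happ z Hz d Hd) as [y [Hy1 Hy2]].
        exists y. split; auto. right. auto.
      - assert (- e z <= - e 0).
        { apply (closure_le (fun y => - e y) z). apply continuity_pt_opp; auto.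
          intros d Hd. destruct (Happ z Hz d Hd) as [y [Hy1 Hy2]].
          exists y. split; auto. right. rewrite Hein; auto. }
        lra. }
    apply HnA. split; apply Hfix. rewrite Rabs_right; lra. rewrite Rabs_Ropp, Rabs_right; lra.
Qed.

Lemma path_exit (w e : R -> R) h rho2 :
  (forall s, continuity_pt w s) ->
  (forall s, Rabs (w s) <= h -> continuity_pt e s) ->
  (forall s, Rabs (w s) <= h -> e s <= rho2 -> Rabs (w s) < h) ->
  (Rabs (w 0) < h /\ e 0 < rho2) ->
  ~ (Rabs (w 1) < h /\ e 1 < rho2) ->
  exists s, 0 <= s <= 1 /\ Rabs (w s) < h /\ e s = rho2.
Proof.
  intros Hw He Hgap H0 H1.
  destruct (first_exit (fun s => Rabs (w s) < h /\ e s < rho2) 1 Rlt_0_1 H0 H1)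
    as [s [Hs [Hbel HnA]]].
  - intros s Hs [A1 A2].
    destruct (lt_near (fun y => Rabs (w y)) s h (cont_abs _ _ (Hw s)) A1) as [d1 [Hd1 Hd1']].
    destruct (lt_near e s rho2 (He s ltac:(lra)) A2) as [d2 [Hd2 Hd2']].
    exists (Rmin d1 d2). split. apply Rmin_pos; auto. intros s' Hs'. split.
    apply Hd1'. eapply Rlt_le_trans; [exact Hs'|apply Rmin_l].
    apply Hd2'. eapply Rlt_le_trans; [exact Hs'|apply Rmin_r].
  - assert (Happ : forall d, 0 < d -> exists y, Rabs (y - s) < d /\ 0 <= y < s).
    { intros d Hd. set (k := Rmin d s / 2).
      assert (Hk : 0 < k) by (unfold k; assert (0 < Rmin d s) by (apply Rmin_pos; lra); lra).
      assert (Hk2 : k < d) by (unfold k; assert (Rmin d s <= d) by apply Rmin_l; lra).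
      assert (Hk3 : k < s) by (unfold k; assert (Rmin d s <= s) by apply Rmin_r; lra).
      exists (s - k). split. replace (s - k - s) with (-k) by ring. rewrite Rabs_Ropp, Rabs_right; lra. lra. }
    assert (Hw1 : Rabs (w s) <= h).
    { apply (closure_le (fun y => Rabs (w y))). apply cont_abs, Hw.
      intros d Hd. destruct (Happ d Hd) as [y [Hy1 Hy2]]. exists y. split; auto.
      left. apply Hbel; auto. }
    assert (He1 : e s <= rho2).
    { apply closure_le. auto. intros d Hd. destruct (Happ d Hd) as [y [Hy1 Hy2]].
      exists y. split; auto. left. apply Hbel; auto. }
    assert (Hw2 := Hgap s Hw1 He1).
    exists s. split. lra. split. auto.
    destruct He1 as [|]; auto. exfalso; apply HnA; split; auto.
Qed.

Lemma polar a b : a ^ 2 + b ^ 2 = 1 -> exists th, cos th = a /\ sin th = b.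
Proof.
  intros H.
  assert (Ha : -1 <= a <= 1) by nra.
  assert (Hs : sqrt (1 - a²) = Rabs b).
  { rewrite <- sqrt_Rsqr_abs. f_equal. unfold Rsqr. nra. }
  destruct (Rle_dec 0 b).
  - exists (acos a). split. apply cos_acos; auto. rewrite sin_acos by auto. rewrite Hs, Rabs_right; lra.
  - exists (- acos a). split. rewrite cos_neg. apply cos_acos; auto.
    rewrite sin_neg, sin_acos by auto. rewrite Hs, Rabs_left; lra.
Qed.

Lemma D_eq f x l l' : derivable_pt_lim f x l -> l = l' -> derivable_pt_lim f x l'.
Proof. intros H ->; auto. Qed.
Lemma D_plus f g x a b : derivable_pt_lim f x a -> derivable_pt_lim g x b ->
  derivable_pt_lim (fun t => f t + g t) x (a + b).
Proof. intros; apply (derivable_pt_lim_plus f g); auto. Qed.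
Lemma D_minus f g x a b : derivable_pt_lim f x a -> derivable_pt_lim g x b ->
  derivable_pt_lim (fun t => f t - g t) x (a - b).
Proof. intros; apply (derivable_pt_lim_minus f g); auto. Qed.
Lemma D_mult f g x a b : derivable_pt_lim f x a -> derivable_pt_lim g x b ->
  derivable_pt_lim (fun t => f t * g t) x (a * g x + f x * b).
Proof. intros; apply (derivable_pt_lim_mult f g); auto. Qed.
Lemma D_opp f x a : derivable_pt_lim f x a -> derivable_pt_lim (fun t => - f t) x (- a).
Proof. intros; apply (derivable_pt_lim_opp f); auto. Qed.
Lemma D_const k x : derivable_pt_lim (fun _ => k) x 0.
Proof. apply derivable_pt_lim_const. Qed.
Lemma D_id x : derivable_pt_lim (fun t => t) x 1.
Proof. apply derivable_pt_lim_id. Qed.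
Lemma D_comp f g x a b : derivable_pt_lim g x a -> derivable_pt_lim f (g x) b ->
  derivable_pt_lim (fun t => f (g t)) x (b * a).
Proof. intros; apply (derivable_pt_lim_comp g f); auto. Qed.
Lemma D_pow f x a n : derivable_pt_lim f x a ->
  derivable_pt_lim (fun t => f t ^ n) x (INR n * f x ^ (Nat.pred n) * a).
Proof. intros. apply (D_comp (fun y => y ^ n) f); auto. apply derivable_pt_lim_pow. Qed.
Lemma D_exp f x a : derivable_pt_lim f x a -> derivable_pt_lim (fun t => exp (f t)) x (exp (f x) * a).
Proof. intros. apply (D_comp exp f); auto. apply derivable_pt_lim_exp. Qed.
Lemma D_div f g x a b : g x <> 0 -> derivable_pt_lim f x a -> derivable_pt_lim g x b ->
  derivable_pt_lim (fun t => f t / g t) x ((a * g x - b * f x) / (g x)²).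
Proof. intros; apply (derivable_pt_lim_div f g); auto. Qed.
Lemma D_cont f x a : derivable_pt_lim f x a -> continuity_pt f x.
Proof. intros H. apply derivable_continuous_pt. exists a. exact H. Qed.

Lemma sq_lt a b : Rabs a < b -> a ^ 2 < b ^ 2.
Proof. intros H. rewrite <- (pow2_abs a). assert (0 <= Rabs a) by apply Rabs_pos. nra. Qed.
Lemma sq_lt_inv a b : 0 <= b -> a ^ 2 < b ^ 2 -> Rabs a < b.
Proof. intros H H2. rewrite <- (pow2_abs a) in H2. assert (0 <= Rabs a) by apply Rabs_pos. nra. Qed.

Section Main.
Variables p1 dp1 q0 q1 q2 dq0 dq1 dq2 : R -> R.
Hypothesis Hdp1 : forall x, derivable_pt_lim p1 x (dp1 x).
Hypothesis Hdq0 : forall x, derivable_pt_lim q0 x (dq0 x).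
Hypothesis Hdq1 : forall x, derivable_pt_lim q1 x (dq1 x).
Hypothesis Hdq2 : forall x, derivable_pt_lim q2 x (dq2 x).
Hypothesis Hcdp1 : forall x, continuity_pt dp1 x.
Hypothesis Hq00 : q0 0 = 0.
Hypothesis Hst : forall x, q1 x = 2 * x * p1 x - 2 * x ^ 2 * q2 x.

Definition p0 x := - x ^ 2 * p1 x.
Definition dp0 x := - (2 * x * p1 x + x ^ 2 * dp1 x).
Definition gg x := - p1 x * (q0 x + q1 x * x ^ 2 + q2 x * x ^ 4).
Definition dgg x := - (dp1 x * (q0 x + q1 x * x ^ 2 + q2 x * x ^ 4) +
   p1 x * (dq0 x + (dq1 x * x ^ 2 + q1 x * (2 * x)) + (dq2 x * x ^ 4 + q2 x * (4 * x ^ 3)))).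
Hypothesis Hur : forall x, dgg x * p1 x - (q2 x + dp1 x) * gg x = p1 x.

Definition Pf x y := p0 x + p1 x * y.
Definition Qf x y := q0 x + q1 x * y + q2 x * y ^ 2.
Definition fF := fun x => - (q2 x + dp1 x) / p1 x.
Definition FF := fun x => Rint fF 0 x.
Definition G x := gg x * exp (FF x).
Definition Egy a b := G a ^ 2 + (Pf a b * exp (FF a)) ^ 2.

Variable c : R.
Hypothesis Hc0 : 0 < c.
Hypothesis Hc : forall x, Rabs x <= c -> p1 x <> 0.

Lemma dp0_ok x : derivable_pt_lim p0 x (dp0 x).
Proof.
  unfold p0, dp0. eapply D_eq.
  apply D_mult. apply D_opp. apply D_pow. apply D_id. apply Hdp1.
  simpl. ring.
Qed.

Lemma dgg_ok x : derivable_pt_lim gg x (dgg x).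
Proof.
  unfold gg, dgg. eapply D_eq.
  apply D_mult. apply D_opp. apply Hdp1.
  apply D_plus. apply D_plus. apply Hdq0. apply D_mult. apply Hdq1. apply D_pow. apply D_id.
  apply D_mult. apply Hdq2. apply D_pow. apply D_id.
  simpl. ring.
Qed.

Lemma p1_cont x : continuity_pt p1 x. Proof. exact (D_cont _ _ _ (Hdp1 x)). Qed.
Lemma q2_cont x : continuity_pt q2 x. Proof. exact (D_cont _ _ _ (Hdq2 x)). Qed.
Lemma q1_cont x : continuity_pt q1 x. Proof. exact (D_cont _ _ _ (Hdq1 x)). Qed.
Lemma q0_cont x : continuity_pt q0 x. Proof. exact (D_cont _ _ _ (Hdq0 x)). Qed.
Lemma p0_cont x : continuity_pt p0 x. Proof. exact (D_cont _ _ _ (dp0_ok x)). Qed.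
Lemma gg_cont x : continuity_pt gg x. Proof. exact (D_cont _ _ _ (dgg_ok x)). Qed.

Lemma fF_cont x : Rabs x <= c -> continuity_pt fF x.
Proof.
  intros Hx. unfold fF. apply continuity_pt_div.
  - apply continuity_pt_opp. apply continuity_pt_plus. apply q2_cont. apply Hcdp1.
  - apply p1_cont.
  - apply Hc; auto.
Qed.

Lemma FF_der x : Rabs x < c -> derivable_pt_lim FF x (fF x).
Proof.
  intros Hx. unfold FF. apply (Rint_deriv fF c x Hc0).
  - intros y Hy. apply fF_cont. apply Rabs_le. lra.
  - apply Rabs_def2 in Hx. lra.
Qed.

Lemma FF0 : FF 0 = 0.
Proof. unfold FF. apply Rint_zero. Qed.

Lemma gg0 : gg 0 = 0.
Proof. unfold gg. rewrite Hq00. ring. Qed.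

Lemma G0 : G 0 = 0.
Proof. unfold G. rewrite gg0. ring. Qed.

Lemma G_der x : Rabs x < c -> derivable_pt_lim G x (exp (FF x)).
Proof.
  intros Hx. unfold G. eapply D_eq.
  apply D_mult. apply dgg_ok. apply D_exp. apply FF_der; auto.
  assert (Hp : p1 x <> 0) by (apply Hc; lra).
  assert (H := Hur x). unfold fF.
  replace (dgg x) with ((p1 x + (q2 x + dp1 x) * gg x) / p1 x) by (field_simplify_eq; [lra|auto]).
  field. auto.
Qed.

Lemma G_cont x : Rabs x < c -> continuity_pt G x.
Proof. intros; apply (D_cont _ _ _ (G_der x H)). Qed.

Lemma G_incr a b : -c < a -> a < b -> b < c -> G a < G b.
Proof.
  intros Ha Hab Hb.
  destruct (MVT_cor2 G (fun x => exp (FF x)) a b Hab) as [z [Hz1 Hz2]].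
  - intros z Hz. apply G_der. apply Rabs_def1; lra.
  - assert (0 < exp (FF z)) by apply exp_pos. nra.
Qed.

Lemma G_inj a b : Rabs a < c -> Rabs b < c -> G a = G b -> a = b.
Proof.
  intros Ha Hb Hab. apply Rabs_def2 in Ha. apply Rabs_def2 in Hb.
  destruct (Rtotal_order a b) as [H|[H|H]]; auto.
  - assert (G a < G b) by (apply G_incr; lra). lra.
  - assert (G b < G a) by (apply G_incr; lra). lra.
Qed.

Lemma G_sign x : Rabs x < c -> x <> 0 -> 0 < x * G x.
Proof.
  intros Hx Hx0. apply Rabs_def2 in Hx. destruct (Rtotal_order x 0) as [H|[H|H]].
  - assert (G x < G 0) by (apply G_incr; lra). rewrite G0 in H0. nra.
  - contradiction.
  - assert (G 0 < G x) by (apply G_incr; lra). rewrite G0 in H0. nra.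
Qed.

Definition hh := c / 2.
Definition mm := Rmin (G hh) (- G (- hh)).

Lemma hh_pos : 0 < hh. Proof. unfold hh; lra. Qed.
Lemma hh_c : hh < c. Proof. unfold hh; lra. Qed.

Lemma mm_pos : 0 < mm.
Proof.
  unfold mm. apply Rmin_pos.
  - rewrite <- G0. apply G_incr; unfold hh; lra.
  - assert (G (-hh) < G 0) by (apply G_incr; unfold hh; lra). rewrite G0 in H. lra.
Qed.

Lemma gap a : Rabs a <= hh -> Rabs (G a) < mm -> Rabs a < hh.
Proof.
  intros Ha HG. destruct Ha as [|Heq]; auto. exfalso.
  unfold Rabs in Heq. destruct (Rcase_abs a).
  - assert (a = - hh) by lra. subst a.
    assert (mm <= - G (-hh)) by apply Rmin_r.
    assert (G (-hh) < 0) by (rewrite <- G0; apply G_incr; unfold hh; lra).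
    rewrite Rabs_left in HG; lra.
  - subst a. assert (mm <= G hh) by apply Rmin_l.
    assert (0 < G hh) by (rewrite <- G0; apply G_incr; unfold hh; lra).
    rewrite Rabs_right in HG; lra.
Qed.

Lemma small_nbhd : exists r, 0 < r /\ forall x y, x ^ 2 + y ^ 2 < r ^ 2 ->
  Rabs x < hh /\ Egy x y < mm ^ 2.
Proof.
  assert (Hm := mm_pos). assert (Hh := hh_pos).
  set (K := Rabs (p1 0) + 1).
  assert (HK : 0 < K) by (unfold K; assert (0 <= Rabs (p1 0)) by apply Rabs_pos; lra).
  assert (Hc00 : Rabs 0 < c) by (rewrite Rabs_R0; lra).
  destruct (cont_eps G 0 (G_cont 0 Hc00) (mm / 2)) as [d1 [Hd1 H1]]; [lra|].
  destruct (cont_eps p0 0 (p0_cont 0) (mm / 8)) as [d2 [Hd2 H2]]; [lra|].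
  destruct (cont_eps p1 0 (p1_cont 0) 1) as [d3 [Hd3 H3]]; [lra|].
  assert (Hce : continuity_pt (fun x => exp (FF x)) 0).
  { apply (D_cont _ _ _ (D_exp _ _ _ (FF_der 0 Hc00))). }
  destruct (cont_eps (fun x => exp (FF x)) 0 Hce 1) as [d4 [Hd4 H4]]; [lra|].
  set (r := Rmin (Rmin (Rmin d1 d2) (Rmin d3 d4)) (Rmin hh (mm / (8 * K)))).
  assert (Hr1 : r <= d1 /\ r <= d2 /\ r <= d3 /\ r <= d4 /\ r <= hh /\ r <= mm / (8 * K)).
  { unfold r. unfold Rmin. repeat destruct Rle_dec; repeat split; lra. }
  assert (Hr : 0 < r).
  { unfold r. repeat apply Rmin_pos; auto. apply Rdiv_lt_0_compat; lra. }
  exists r. split; auto. intros x y Hxy.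
  assert (Hx : Rabs x < r). { apply sq_lt_inv. lra. nra. }
  assert (Hy : Rabs y < r). { apply sq_lt_inv. lra. nra. }
  destruct Hr1 as [R1 [R2 [R3 [R4 [R5 R6]]]]].
  assert (Hx0 : Rabs (x - 0) < r) by (rewrite Rminus_0_r; lra).
  specialize (H1 x ltac:(lra)). specialize (H2 x ltac:(lra)).
  specialize (H3 x ltac:(lra)). specialize (H4 x ltac:(lra)).
  rewrite G0, Rminus_0_r in H1. unfold p0 in H2 at 2. replace (- 0 ^ 2 * p1 0) with 0 in H2 by ring.
  rewrite Rminus_0_r in H2. rewrite FF0, exp_0 in H4.
  split. lra.
  unfold Egy.
  assert (A1 : G x ^ 2 < (mm / 2) ^ 2) by (apply sq_lt; auto).
  assert (Hp1 : Rabs (p1 x) < K).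
  { unfold K. assert (Rabs (p1 x) <= Rabs (p1 0) + Rabs (p1 x - p1 0)).
    { replace (p1 x) with (p1 0 + (p1 x - p1 0)) at 1 by ring. apply Rabs_triang. }
    lra. }
  assert (Hex : Rabs (exp (FF x)) < 2).
  { assert (Rabs (exp (FF x)) <= Rabs 1 + Rabs (exp (FF x) - 1)).
    { replace (exp (FF x)) with (1 + (exp (FF x) - 1)) at 1 by ring. apply Rabs_triang. }
    rewrite Rabs_R1 in H. lra. }
  assert (HP : Rabs (Pf x y) < mm / 4).
  { unfold Pf. apply Rle_lt_trans with (Rabs (p0 x) + Rabs (p1 x * y)). apply Rabs_triang.
    rewrite Rabs_mult.
    assert (Rabs (p1 x) * Rabs y <= K * (mm / (8 * K))).
    { apply Rmult_le_compat; try apply Rabs_pos; lra. }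
    replace (K * (mm / (8 * K))) with (mm / 8) in H by (field; lra). lra. }
  assert (A2 : (Pf x y * exp (FF x)) ^ 2 < (mm / 2) ^ 2).
  { apply sq_lt. rewrite Rabs_mult.
    apply Rle_lt_trans with (mm / 4 * Rabs (exp (FF x))).
    apply Rmult_le_compat_r. apply Rabs_pos. lra.
    assert (0 < Rabs (exp (FF x))) by (apply Rabs_pos_lt; apply Rgt_not_eq, exp_pos). nra. }
  nra.
Qed.


Lemma C_plus f g x : continuity_pt f x -> continuity_pt g x -> continuity_pt (fun t => f t + g t) x.
Proof. intros; apply (continuity_pt_plus f g); auto. Qed.
Lemma C_minus f g x : continuity_pt f x -> continuity_pt g x -> continuity_pt (fun t => f t - g t) x.
Proof. intros; apply (continuity_pt_minus f g); auto. Qed.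
Lemma C_mult f g x : continuity_pt f x -> continuity_pt g x -> continuity_pt (fun t => f t * g t) x.
Proof. intros; apply (continuity_pt_mult f g); auto. Qed.
Lemma C_opp f x : continuity_pt f x -> continuity_pt (fun t => - f t) x.
Proof. intros; apply (continuity_pt_opp f); auto. Qed.
Lemma C_div f g x : continuity_pt f x -> continuity_pt g x -> g x <> 0 -> continuity_pt (fun t => f t / g t) x.
Proof. intros; apply (continuity_pt_div f g); auto. Qed.
Lemma C_comp f g x : continuity_pt g x -> continuity_pt f (g x) -> continuity_pt (fun t => f (g t)) x.
Proof. intros; apply (continuity_pt_comp g f); auto. Qed.
Lemma C_pow f x n : continuity_pt f x -> continuity_pt (fun t => f t ^ n) x.
Proof. intros. apply (C_comp (fun y => y ^ n) f); auto. apply (D_cont _ _ _ (derivable_pt_lim_pow _ n)). Qed.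
Lemma C_const k x : continuity_pt (fun _ => k) x.
Proof. apply continuity_pt_const. intros a b; auto. Qed.
Lemma C_id x : continuity_pt (fun t => t) x.
Proof. apply (D_cont _ _ _ (D_id x)). Qed.

Definition Ur u0 v0 t := u0 * cos t + v0 * sin t.
Definition Vr u0 v0 t := - u0 * sin t + v0 * cos t.

Lemma Ur_der u0 v0 t : derivable_pt_lim (Ur u0 v0) t (Vr u0 v0 t).
Proof.
  unfold Ur, Vr. eapply D_eq. apply D_plus; apply D_mult.
  apply D_const. apply derivable_pt_lim_cos. apply D_const. apply derivable_pt_lim_sin. cbv beta. ring.
Qed.
Lemma Vr_der u0 v0 t : derivable_pt_lim (Vr u0 v0) t (- Ur u0 v0 t).
Proof.
  unfold Ur, Vr. eapply D_eq. apply D_plus; apply D_mult.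
  apply D_const. apply derivable_pt_lim_sin. apply D_const. apply derivable_pt_lim_cos. cbv beta. ring.
Qed.
Lemma rot_norm u0 v0 t : Ur u0 v0 t ^ 2 + Vr u0 v0 t ^ 2 = u0 ^ 2 + v0 ^ 2.
Proof.
  unfold Ur, Vr. assert (H := sin2_cos2 t). unfold Rsqr in H.
  transitivity ((u0 ^ 2 + v0 ^ 2) * (sin t * sin t + cos t * cos t)). ring. rewrite H; ring.
Qed.
Lemma rot_0 u0 v0 : Ur u0 v0 0 = u0 /\ Vr u0 v0 0 = v0.
Proof. unfold Ur, Vr. rewrite cos_0, sin_0. split; ring. Qed.
Lemma rot_per u0 v0 t : Ur u0 v0 (t + 2 * PI) = Ur u0 v0 t /\ Vr u0 v0 (t + 2 * PI) = Vr u0 v0 t.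
Proof. unfold Ur, Vr. rewrite cos_plus, sin_plus, cos_2PI, sin_2PI. split; ring. Qed.

Lemma u_der x y t : is_solution Pf Qf x y -> Rabs (x t) < c ->
  derivable_pt_lim (fun t => G (x t)) t (Pf (x t) (y t) * exp (FF (x t))).
Proof.
  intros Hs Hx. destruct (Hs t) as [Hx' Hy']. eapply D_eq.
  apply (D_comp G x). exact Hx'. apply G_der; auto. ring.
Qed.

Lemma v_der x y t : is_solution Pf Qf x y -> Rabs (x t) < c ->
  derivable_pt_lim (fun t => Pf (x t) (y t) * exp (FF (x t))) t (- G (x t)).
Proof.
  intros Hs Hx. destruct (Hs t) as [Hx' Hy'].
  assert (Hp : p1 (x t) <> 0) by (apply Hc; lra).
  eapply D_eq. apply D_mult. unfold Pf at 1. apply D_plus. apply (D_comp p0 x). exact Hx'. apply dp0_ok.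
  apply D_mult. apply (D_comp p1 x). exact Hx'. apply Hdp1. exact Hy'.
  apply D_exp. apply (D_comp FF x). exact Hx'. apply FF_der. auto.
  unfold G, Qf, Pf, gg, fF, p0, dp0. rewrite !Hst. field. auto.
Qed.

Lemma sol_char x y : is_solution Pf Qf x y -> Rabs (x 0) < hh -> Egy (x 0) (y 0) < mm ^ 2 ->
  forall t, Rabs (x t) < hh /\
    G (x t) = Ur (G (x 0)) (Pf (x 0) (y 0) * exp (FF (x 0))) t /\
    Pf (x t) (y t) * exp (FF (x t)) = Vr (G (x 0)) (Pf (x 0) (y 0) * exp (FF (x 0))) t.
Proof.
  intros Hs H0 HE.
  assert (Hhc := hh_c). assert (Hmm := mm_pos).
  set (u := fun t => G (x t)). set (v := fun t => Pf (x t) (y t) * exp (FF (x t))).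
  assert (Hd : forall t, Rabs (x t) < c -> derivable_pt_lim (fun t => u t ^ 2 + v t ^ 2) t 0).
  { intros t Ht. eapply D_eq. apply D_plus; apply D_pow. apply (u_der x y t Hs Ht). apply (v_der x y t Hs Ht).
    simpl. unfold u, v. ring. }
  assert (Hin : forall t, Rabs (x t) < hh).
  { apply (trap x (fun t => u t ^ 2 + v t ^ 2) hh).
    - intro t. apply (D_cont _ _ _ (proj1 (Hs t))).
    - intros t Ht. apply (D_cont _ _ _ (Hd t ltac:(lra))).
    - intros t Ht Heq. apply gap; auto. apply sq_lt_inv. lra.
      assert (0 <= v t ^ 2) by (apply pow2_ge_0).
      assert (Hq : G (x t) ^ 2 + v t ^ 2 = Egy (x 0) (y 0)) by exact Heq. lra.
    - intros T HT Hr r Hrr.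
      assert (Hc1 := deriv_const_interval (fun t => u t ^ 2 + v t ^ 2) (-T) T ltac:(lra)).
      assert (Hc2 : forall t, -T <= t <= T -> derivable_pt_lim (fun t => u t ^ 2 + v t ^ 2) t 0).
      { intros t Ht. apply Hd. specialize (Hr t Ht). lra. }
      rewrite (Hc1 Hc2 r Hrr), (Hc1 Hc2 0 ltac:(lra)). reflexivity.
    - auto. }
  set (u0 := G (x 0)). set (v0 := Pf (x 0) (y 0) * exp (FF (x 0))).
  set (D := fun t => (u t - Ur u0 v0 t) ^ 2 + (v t - Vr u0 v0 t) ^ 2).
  assert (HD : forall t, D t = D 0).
  { apply deriv_const_global. intro t. unfold D. eapply D_eq.
    apply D_plus; apply D_pow; apply D_minus.
    apply (u_der x y t Hs). specialize (Hin t); lra. apply Ur_der.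
    apply (v_der x y t Hs). specialize (Hin t); lra. apply Vr_der.
    simpl. unfold u, v. ring. }
  assert (HD0 : D 0 = 0).
  { unfold D. destruct (rot_0 u0 v0) as [-> ->]. unfold u, v, u0, v0. ring. }
  intro t. specialize (HD t). rewrite HD0 in HD. unfold D in HD.
  assert (0 <= (u t - Ur u0 v0 t) ^ 2) by apply pow2_ge_0.
  assert (0 <= (v t - Vr u0 v0 t) ^ 2) by apply pow2_ge_0.
  split. auto. split.
  - assert (Ha : u t - Ur u0 v0 t = 0) by nra. unfold u in Ha. lra.
  - assert (Ha : v t - Vr u0 v0 t = 0) by nra. unfold v in Ha. lra.
Qed.


Lemma G_le a b : -c < a -> a <= b -> b < c -> G a <= G b.
Proof. intros. destruct H0. left; apply G_incr; auto. subst; lra. Qed.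

Definition Ginv (u : R) := epsilon (inhabits 0) (fun z => -hh <= z <= hh /\ G z = u).

Lemma Ginv_spec u : G (-hh) <= u <= G hh -> -hh <= Ginv u <= hh /\ G (Ginv u) = u.
Proof.
  intros Hu. assert (Hh := hh_pos). assert (Hhc := hh_c).
  unfold Ginv. apply epsilon_spec.
  destruct Hu as [[Hu1|Hu1] [Hu2|Hu2]].
  - assert (Hcont : forall a, -hh <= a <= hh -> continuity_pt (fun z => G z - u) a).
    { intros a Ha. apply C_minus. apply G_cont. apply Rabs_def1; lra. apply C_const. }
    destruct (IVT_interv (fun z => G z - u) (-hh) hh Hcont ltac:(lra) ltac:(lra) ltac:(lra))
      as [z [Hz1 Hz2]].
    exists z. split; auto. lra.
  - exists hh. split; auto; lra.
  - exists (-hh). split; auto; lra.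
  - exists hh. split; auto; lra.
Qed.

Lemma Ginv_G a : Rabs a <= hh -> Ginv (G a) = a.
Proof.
  intros Ha. assert (Hh := hh_pos). assert (Hhc := hh_c).
  assert (Ha' : -hh <= a <= hh) by (unfold Rabs in Ha; destruct Rcase_abs in Ha; lra).
  assert (G (-hh) <= G a <= G hh) by (split; apply G_le; lra).
  destruct (Ginv_spec (G a) H) as [H1 H2].
  apply G_inj; auto; apply Rabs_def1; lra.
Qed.

Lemma Ginv_der u : G (-hh) < u < G hh -> derivable_pt_lim Ginv u (/ exp (FF (Ginv u))).
Proof.
  intros Hu. assert (Hh := hh_pos). assert (Hhc := hh_c).
  assert (Hm : Ginv (G (-hh)) = -hh) by (apply Ginv_G; rewrite Rabs_Ropp, Rabs_right; lra).
  assert (Hp : Ginv (G hh) = hh) by (apply Ginv_G; rewrite Rabs_right; lra).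
  assert (Prf : forall a, Ginv (G (-hh)) <= a <= Ginv (G hh) -> derivable_pt G a).
  { intros a Ha. rewrite Hm, Hp in Ha. exists (exp (FF a)). apply G_der. apply Rabs_def1; lra. }
  assert (Hincr : forall x y, -hh <= x -> x < y -> y <= hh -> G x < G y).
  { intros; apply G_incr; lra. }
  assert (Hcomp : forall x, G (-hh) <= x -> x <= G hh -> comp G Ginv x = id x).
  { intros x H1 H2. unfold comp, id. apply Ginv_spec; auto. }
  assert (Hrange : forall x, G (-hh) <= x -> x <= G hh -> -hh <= Ginv x <= hh).
  { intros x H1 H2. apply Ginv_spec; auto. }
  assert (HGc : forall a, -hh <= a <= hh -> continuity_pt G a).
  { intros a Ha. apply G_cont. apply Rabs_def1; lra. }
  assert (Prg : continuity_pt Ginv u).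
  { apply (continuity_pt_recip_interv G Ginv (-hh) hh ltac:(lra) Hincr Hcomp Hrange HGc). auto. }
  assert (Hsp := Ginv_spec u ltac:(lra)).
  assert (Prg_incr : Ginv (G (-hh)) <= Ginv u <= Ginv (G hh)) by (rewrite Hm, Hp; lra).
  assert (Hd : derivable_pt_lim G (Ginv u) (exp (FF (Ginv u)))) by (apply G_der; apply Rabs_def1; lra).
  assert (Hne : derive_pt G (Ginv u) (Prf (Ginv u) Prg_incr) <> 0).
  { rewrite (derive_pt_eq_0 _ _ _ _ Hd). apply Rgt_not_eq, exp_pos. }
  assert (H := derivable_pt_lim_recip_interv G Ginv (G (-hh)) (G hh) u Prf Prg ltac:(lra) Hu
    Prg_incr ltac:(intros; apply Hcomp; lra) Hne).
  rewrite (derive_pt_eq_0 _ _ _ _ Hd) in H. unfold Rdiv in H. rewrite Rmult_1_l in H. exact H.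
Qed.

Lemma exist_sol x0 y0 : Rabs x0 < hh -> Egy x0 y0 < mm ^ 2 ->
  exists X Y, is_solution Pf Qf X Y /\ X 0 = x0 /\ Y 0 = y0.
Proof.
  intros Hx0 HE. assert (Hh := hh_pos). assert (Hhc := hh_c). assert (Hmm := mm_pos).
  set (u0 := G x0). set (v0 := Pf x0 y0 * exp (FF x0)).
  assert (HU : forall t, Rabs (Ur u0 v0 t) < mm).
  { intro t. apply sq_lt_inv. lra. assert (H := rot_norm u0 v0 t).
    assert (0 <= Vr u0 v0 t ^ 2) by apply pow2_ge_0.
    assert (Egy x0 y0 = u0 ^ 2 + v0 ^ 2) by reflexivity. lra. }
  assert (HmG : mm <= G hh /\ mm <= - G (- hh)) by (split; [apply Rmin_l|apply Rmin_r]).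
  assert (HU2 : forall t, G (-hh) < Ur u0 v0 t < G hh).
  { intro t. specialize (HU t). apply Rabs_def2 in HU. lra. }
  set (X := fun t => Ginv (Ur u0 v0 t)).
  assert (HX : forall t, Rabs (X t) < hh /\ G (X t) = Ur u0 v0 t).
  { intro t. destruct (Ginv_spec (Ur u0 v0 t)) as [H1 H2]. specialize (HU2 t); lra.
    unfold X. split; auto. apply gap. apply Rabs_le; lra. rewrite H2. auto. }
  set (Y := fun t => (Vr u0 v0 t * exp (- FF (X t)) - p0 (X t)) / p1 (X t)).
  assert (HXd : forall t, derivable_pt_lim X t (/ exp (FF (X t)) * Vr u0 v0 t)).
  { intro t. apply (D_comp Ginv (Ur u0 v0)). apply Ur_der. apply Ginv_der. auto. }
  exists X, Y. split; [|split].
  - intro t. destruct (HX t) as [HX1 HX2].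
    assert (Hp : p1 (X t) <> 0) by (apply Hc; lra).
    assert (He : exp (FF (X t)) <> 0) by apply Rgt_not_eq, exp_pos.
    split.
    + eapply D_eq. apply HXd. unfold Pf, Y. rewrite exp_Ropp. field. auto.
    + eapply D_eq. apply D_div. auto. apply D_minus. apply D_mult. apply Vr_der.
      apply D_exp. apply D_opp. apply (D_comp FF X). apply HXd. apply FF_der. lra.
      apply (D_comp p0 X). apply HXd. apply dp0_ok. apply (D_comp p1 X). apply HXd. apply Hdp1.
      rewrite <- HX2. unfold Y, Qf, G, gg, fF, p0, dp0. rewrite !Hst. rewrite exp_Ropp.
      unfold Rsqr. field. auto.
  - unfold X. destruct (rot_0 u0 v0) as [-> _]. unfold u0. apply Ginv_G. lra.
  - assert (HX0 : X 0 = x0).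
    { unfold X. destruct (rot_0 u0 v0) as [-> _]. unfold u0. apply Ginv_G. lra. }
    unfold Y. rewrite HX0. destruct (rot_0 u0 v0) as [_ ->]. unfold v0, Pf.
    assert (Hp : p1 x0 <> 0) by (apply Hc; lra).
    assert (He : exp (FF x0) <> 0) by apply Rgt_not_eq, exp_pos.
    rewrite exp_Ropp. field. auto.
Qed.


Lemma pt_eq a b a' b' : Rabs a < c -> Rabs a' < c -> G a = G a' ->
  Pf a b * exp (FF a) = Pf a' b' * exp (FF a') -> a = a' /\ b = b'.
Proof.
  intros Ha Ha' HG HP. assert (a = a') by (apply G_inj; auto). subst a'. split; auto.
  apply Rmult_eq_reg_r in HP; [|apply Rgt_not_eq, exp_pos].
  unfold Pf in HP. assert (Hp : p1 a <> 0) by (apply Hc; lra).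
  apply (Rmult_eq_reg_l (p1 a)); auto. lra.
Qed.

Lemma Egy_cont (a b : R -> R) s : continuity_pt a s -> continuity_pt b s -> Rabs (a s) < c ->
  continuity_pt (fun s => Egy (a s) (b s)) s.
Proof.
  intros Ha Hb Has. unfold Egy, Pf. apply C_plus; apply C_pow.
  - apply (C_comp G a); auto. apply G_cont; auto.
  - apply C_mult. apply C_plus. apply (C_comp p0 a); auto. apply p0_cont.
    apply C_mult. apply (C_comp p1 a); auto. apply p1_cont. auto.
    apply (C_comp (fun z => exp (FF z)) a); auto.
    apply (D_cont _ _ _ (D_exp _ _ _ (FF_der _ Has))).
Qed.

Lemma iso : isochronous_center Pf Qf.
Proof.
  assert (Hh := hh_pos). assert (Hhc := hh_c). assert (Hmm := mm_pos).
  destruct small_nbhd as [r [Hr Hrn]].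
  exists r, (2 * PI). split; [auto|split; [pose PI_RGT_0; lra|]].
  intros x0 y0 [Hpos Hlt]. destruct (Hrn x0 y0 Hlt) as [Hx0 HE].
  split. apply exist_sol; auto.
  intros x y Hs Hx Hy. subst x0 y0.
  assert (Hch := sol_char x y Hs Hx0 HE).
  set (u0 := G (x 0)) in *. set (v0 := Pf (x 0) (y 0) * exp (FF (x 0))) in *.
  assert (HE' : Egy (x 0) (y 0) = u0 ^ 2 + v0 ^ 2) by reflexivity.
  assert (Hp10 : p1 0 <> 0) by (apply Hc; rewrite Rabs_R0; lra).
  assert (Hnz : 0 < u0 ^ 2 + v0 ^ 2).
  { destruct (Rle_lt_dec (u0 ^ 2 + v0 ^ 2) 0) as [Hle|]; auto. exfalso.
    assert (Hu : u0 = 0) by nra. assert (Hv : v0 = 0) by nra.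
    assert (Hx00 : x 0 = 0).
    { apply G_inj. lra. rewrite Rabs_R0; lra. rewrite G0. exact Hu. }
    unfold v0, Pf in Hv. rewrite Hx00, FF0, exp_0 in Hv. unfold p0 in Hv.
    assert (y 0 = 0).
    { apply (Rmult_eq_reg_l (p1 0)); auto. lra. }
    rewrite Hx00, H in Hpos. lra. }
  set (rho := sqrt (u0 ^ 2 + v0 ^ 2)).
  assert (Hrho : 0 < rho) by (apply sqrt_lt_R0; auto).
  assert (Hrho2 : rho * rho = u0 ^ 2 + v0 ^ 2) by (apply sqrt_sqrt; lra).
  destruct (polar (u0 / rho) (v0 / rho)) as [al [Hca Hsa]].
  { field_simplify_eq; [|lra]. lra. }
  assert (Hon : forall a b, Rabs a < hh -> Egy a b = u0 ^ 2 + v0 ^ 2 -> exists t, x t = a /\ y t = b).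
  { intros a b Ha Hab.
    destruct (polar (G a / rho) (Pf a b * exp (FF a) / rho)) as [th [Hct Hst']].
    { unfold Egy in Hab. field_simplify_eq; [|lra]. lra. }
    exists (al - th). destruct (Hch (al - th)) as [H1 [H2 H3]].
    assert (E1 : Ur u0 v0 (al - th) = G a).
    { unfold Ur. rewrite cos_minus, sin_minus.
      replace u0 with (rho * cos al) by (rewrite Hca; field; lra).
      replace v0 with (rho * sin al) by (rewrite Hsa; field; lra).
      replace (G a) with (rho * cos th) by (rewrite Hct; field; lra).
      assert (Hq := sin2_cos2 al). unfold Rsqr in Hq.
      transitivity (rho * cos th * (sin al * sin al + cos al * cos al)). ring. rewrite Hq; ring. }
    assert (E2 : Vr u0 v0 (al - th) = Pf a b * exp (FF a)).
    { unfold Vr. rewrite cos_minus, sin_minus.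
      replace u0 with (rho * cos al) by (rewrite Hca; field; lra).
      replace v0 with (rho * sin al) by (rewrite Hsa; field; lra).
      replace (Pf a b * exp (FF a)) with (rho * sin th) by (rewrite Hst'; field; lra).
      assert (Hq := sin2_cos2 al). unfold Rsqr in Hq.
      transitivity (rho * sin th * (sin al * sin al + cos al * cos al)). ring. rewrite Hq; ring. }
    apply pt_eq. lra. lra. congruence. congruence. }
  split.
  - split. pose PI_RGT_0; lra. split.
    + intro t. destruct (Hch t) as [A1 [A2 A3]]. destruct (Hch (t + 2 * PI)) as [B1 [B2 B3]].
      destruct (rot_per u0 v0 t) as [P1 P2].
      apply pt_eq. lra. lra. congruence. congruence.
    + intros s [Hs1 Hs2] [E1 E2]. destruct (Hch s) as [_ [G1 V1]].
      rewrite E1 in G1. rewrite E1, E2 in V1. fold u0 in G1. fold v0 in V1. unfold Ur in G1. unfold Vr in V1.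
      assert (Hcs : cos s < 1).
      { replace s with (2 * (s / 2)) by field. rewrite cos_2a_sin.
        assert (0 < sin (s / 2)) by (apply sin_gt_0; lra). nra. }
      assert (Hq := sin2_cos2 s). unfold Rsqr in Hq.
      assert (Hk : 0 < (cos s - 1) ^ 2 + sin s ^ 2) by nra.
      assert (Eu : ((cos s - 1) ^ 2 + sin s ^ 2) * u0 =
         (cos s - 1) * ((cos s - 1) * u0 + sin s * v0) - sin s * (- sin s * u0 + (cos s - 1) * v0)) by ring.
      assert (Ev : ((cos s - 1) ^ 2 + sin s ^ 2) * v0 =
         sin s * ((cos s - 1) * u0 + sin s * v0) + (cos s - 1) * (- sin s * u0 + (cos s - 1) * v0)) by ring.
      replace ((cos s - 1) * u0 + sin s * v0) with 0 in Eu, Ev by lra.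
      replace (- sin s * u0 + (cos s - 1) * v0) with 0 in Eu, Ev by lra.
      assert (u0 = 0) by (apply (Rmult_eq_reg_l ((cos s - 1) ^ 2 + sin s ^ 2)); lra).
      assert (v0 = 0) by (apply (Rmult_eq_reg_l ((cos s - 1) ^ 2 + sin s ^ 2)); lra).
      nra.
  - split.
    + intros t [Z1 Z2]. destruct (Hch t) as [_ [G1 V1]]. rewrite Z1 in G1. rewrite Z1, Z2 in V1.
      rewrite G0 in G1. unfold Pf, p0 in V1. rewrite FF0, exp_0 in V1.
      assert (H := rot_norm u0 v0 t). rewrite <- G1 in H.
      replace (Vr u0 v0 t) with 0 in H by (rewrite <- V1; ring). lra.
    + intros c1 c2 Hc1 Hc2 H10 H20 Hfar.
      assert (Hpath : forall a b : R -> R, (forall s, continuity_pt a s) -> (forall s, continuity_pt b s) ->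
         Rabs (a 0) < hh -> Egy (a 0) (b 0) < u0 ^ 2 + v0 ^ 2 ->
         ~ (Rabs (a 1) < hh /\ Egy (a 1) (b 1) < u0 ^ 2 + v0 ^ 2) ->
         exists s t, 0 <= s <= 1 /\ a s = x t /\ b s = y t).
      { clear Hs. intros a b Ha Hb Ha0 Hb0 H1.
        destruct (path_exit a (fun s => Egy (a s) (b s)) hh (u0 ^ 2 + v0 ^ 2) Ha) as [s [Hs1 [Hs2 Hs3]]].
        - intros s Hs. apply Egy_cont; auto. lra.
        - intros s Hs Hes. apply gap; auto. apply sq_lt_inv. lra.
          unfold Egy in Hes. assert (0 <= (Pf (a s) (b s) * exp (FF (a s))) ^ 2) by apply pow2_ge_0. lra.
        - auto.
        - auto.
        - destruct (Hon (a s) (b s) Hs2 Hs3) as [t [T1 T2]]. exists s, t. split; auto. }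
      assert (HE0 : Egy 0 0 = 0).
      { unfold Egy, Pf, p0. rewrite G0, FF0, exp_0. ring. }
      destruct (classic (Rabs (c1 1) < hh /\ Egy (c1 1) (c2 1) < u0 ^ 2 + v0 ^ 2)) as [A1|A1].
      * exfalso.
        assert (HL : exists L, 0 <= L /\ ~ (Rabs ((1 + L) * c1 1) < hh /\
                  Egy ((1 + L) * c1 1) ((1 + L) * c2 1) < u0 ^ 2 + v0 ^ 2)).
        { destruct (Req_dec (c1 1) 0) as [Z|Z].
          - assert (Hc2n : c2 1 <> 0).
            { intro Z2. specialize (Hfar 0). rewrite Z, Z2 in Hfar.
              assert (0 <= x 0 ^ 2) by apply pow2_ge_0. assert (0 <= y 0 ^ 2) by apply pow2_ge_0. lra. }
            assert (Hq : 0 < Rabs (p1 0) * Rabs (c2 1)).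
            { apply Rmult_lt_0_compat; apply Rabs_pos_lt; auto. }
            exists (rho / (Rabs (p1 0) * Rabs (c2 1))). split. apply Rlt_le, Rdiv_lt_0_compat; lra.
            intros [_ B]. rewrite Z, Rmult_0_r in B. unfold Egy, Pf, p0 in B.
            rewrite G0, FF0, exp_0 in B.
            set (w := p1 0 * ((1 + rho / (Rabs (p1 0) * Rabs (c2 1))) * c2 1)) in B.
            assert (Hw : Rabs w = Rabs (p1 0) * Rabs (c2 1) + rho).
            { unfold w. rewrite !Rabs_mult. rewrite (Rabs_right (1 + _)).
              field; repeat split; try (apply Rabs_no_R0; auto). apply Rle_ge. assert (0 <= rho / (Rabs (p1 0) * Rabs (c2 1))).
              apply Rlt_le, Rdiv_lt_0_compat; lra. lra. }
            assert (Hw2 : w ^ 2 = Rabs w ^ 2) by (rewrite pow2_abs; auto).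
            assert (Hw3 : w ^ 2 >= rho * rho) by (rewrite Hw2, Hw; nra).
            nra.
          - exists (hh / Rabs (c1 1)). assert (Hq : 0 < Rabs (c1 1)) by (apply Rabs_pos_lt; auto).
            split. apply Rlt_le, Rdiv_lt_0_compat; lra.
            intros [B _]. rewrite Rabs_mult, (Rabs_right (1 + _)) in B.
            replace ((1 + hh / Rabs (c1 1)) * Rabs (c1 1)) with (Rabs (c1 1) + hh) in B by (field; lra). lra.
            apply Rle_ge. assert (0 <= hh / Rabs (c1 1)) by (apply Rlt_le, Rdiv_lt_0_compat; lra). lra. }
        destruct HL as [L [HL0 HL1]].
        destruct (Hpath (fun l => (1 + L * l) * c1 1) (fun l => (1 + L * l) * c2 1)) as [s [t [Hs0 [T1 T2]]]].
        { intro s. apply C_mult. apply C_plus. apply C_const. apply C_mult. apply C_const. apply C_id. apply C_const. }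
        { intro s. apply C_mult. apply C_plus. apply C_const. apply C_mult. apply C_const. apply C_id. apply C_const. }
        { replace ((1 + L * 0) * c1 1) with (c1 1) by ring. tauto. }
        { replace ((1 + L * 0) * c1 1) with (c1 1) by ring. replace ((1 + L * 0) * c2 1) with (c2 1) by ring. tauto. }
        { replace (1 + L * 1) with (1 + L) by ring. auto. }
        specialize (Hfar t). rewrite <- T1, <- T2 in Hfar.
        assert (Hk : 1 <= 1 + L * s) by nra.
        assert (0 <= c1 1 ^ 2) by apply pow2_ge_0. assert (0 <= c2 1 ^ 2) by apply pow2_ge_0.
        assert (((1 + L * s) * c1 1) ^ 2 + ((1 + L * s) * c2 1) ^ 2 = (1 + L * s) ^ 2 * (c1 1 ^ 2 + c2 1 ^ 2)) by ring.
        nra.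
      * apply (Hpath c1 c2); auto. rewrite H10, Rabs_R0. lra. rewrite H10, H20, HE0. lra.
Qed.


Definition gE x := - q2 x * p0 x ^ 2 / p1 x + q1 x * p0 x - p1 x * q0 x.

Lemma gE_gg x : p1 x <> 0 -> gE x = gg x.
Proof. intros. unfold gE, gg, p0. rewrite Hst. field. auto. Qed.

Lemma gE_cont x : Rabs x <= c -> continuity_pt gE x.
Proof.
  intros Hx. unfold gE. apply C_minus. apply C_plus. apply C_div.
  apply C_mult. apply C_opp. apply q2_cont. apply C_pow. apply p0_cont. apply p1_cont. apply Hc; auto.
  apply C_mult. apply q1_cont. apply p0_cont. apply C_mult. apply p1_cont. apply q0_cont.
Qed.

Lemma urabe : zero_urabe_function Pf Qf.
Proof.
  assert (Hh := hh_pos). assert (Hhc := hh_c).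
  exists p0, p1, q0, q1, q2, dp0, dp1.
  split. intros; reflexivity. split. intros; reflexivity. split. unfold p0; ring.
  split. auto. split. apply Hc; rewrite Rabs_R0; lra. split. apply dp0_ok. split. auto.
  split. intros x Hx. unfold p0, dp0. rewrite Hst. field. auto.
  change (exists delta, 0 < delta /\ forall x, Rabs x < delta ->
    (x <> 0 -> 0 < x * (gE x * exp (FF x))) /\
    / 2 * (gE x * exp (FF x)) ^ 2 = Rint (fun s => gE s * exp (2 * FF s)) 0 x).
  exists hh. split. auto. intros x Hx.
  assert (Hp : p1 x <> 0) by (apply Hc; lra).
  rewrite gE_gg by auto. fold (G x). split.
  { intros; apply G_sign; auto; lra. }
  set (K := fun y => Rint (fun s => gE s * exp (2 * FF s)) 0 y - / 2 * G y ^ 2).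
  assert (HKd : forall y, -hh < y < hh -> derivable_pt_lim K y 0).
  { intros y Hy. assert (Hyc : Rabs y < c) by (apply Rabs_def1; lra).
    unfold K. eapply D_eq. apply D_minus.
    apply (Rint_deriv _ hh y Hh).
    { intros z Hz. apply C_mult. apply gE_cont. apply Rabs_le; lra.
      apply (D_cont _ _ _ (D_exp _ _ _ (D_mult _ _ _ _ _ (D_const 2 z) (FF_der z ltac:(apply Rabs_def1; lra))))). }
    auto.
    apply D_mult. apply D_const. apply D_pow. apply G_der; auto.
    rewrite gE_gg by (apply Hc; lra). unfold G. replace (2 * FF y) with (FF y + FF y) by ring.
    rewrite exp_plus. simpl. field. }
  assert (HK := deriv_const_interval K (- Rabs x) (Rabs x)).
  assert (Hax : Rabs x < hh) by lra.
  assert (H1 : K x = K (- Rabs x)).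
  { apply HK. assert (0 <= Rabs x) by apply Rabs_pos. lra.
    intros t Ht; apply HKd; lra. split. apply Ropp_le_cancel. rewrite Ropp_involutive. rewrite <- Rabs_Ropp. apply RRle_abs. apply RRle_abs. }
  assert (H2 : K 0 = K (- Rabs x)).
  { apply HK. assert (0 <= Rabs x) by apply Rabs_pos. lra.
    intros t Ht; apply HKd; lra. assert (0 <= Rabs x) by apply Rabs_pos. lra. }
  assert (H3 : K 0 = 0).
  { unfold K. rewrite Rint_zero, G0. ring. }
  assert (HK0 : K x = 0) by lra. unfold K in HK0. cbv beta in HK0. lra.
Qed.

Lemma main_abstract : isochronous_zero_urabe Pf Qf.
Proof. split. apply iso. apply urabe. Qed.

End Main.

Lemma abstract_thm (p1 dp1 q0 q1 q2 dq0 dq1 dq2 : R -> R) :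
  (forall x, derivable_pt_lim p1 x (dp1 x)) ->
  (forall x, derivable_pt_lim q0 x (dq0 x)) ->
  (forall x, derivable_pt_lim q1 x (dq1 x)) ->
  (forall x, derivable_pt_lim q2 x (dq2 x)) ->
  (forall x, continuity_pt dp1 x) ->
  q0 0 = 0 -> p1 0 <> 0 ->
  (forall x, q1 x = 2 * x * p1 x - 2 * x ^ 2 * q2 x) ->
  (forall x, dgg p1 dp1 q0 q1 q2 dq0 dq1 dq2 x * p1 x - (q2 x + dp1 x) * gg p1 q0 q1 q2 x = p1 x) ->
  isochronous_zero_urabe (fun x y => - x ^ 2 * p1 x + p1 x * y) (fun x y => q0 x + q1 x * y + q2 x * y ^ 2).
Proof.
  intros H1 H2 H3 H4 H5 H6 H7 H8 H9.
  assert (Hp : 0 < Rabs (p1 0)) by (apply Rabs_pos_lt; auto).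
  destruct (cont_eps p1 0 (D_cont _ _ _ (H1 0)) (Rabs (p1 0) / 2)) as [d [Hd Hd']]; [lra|].
  apply (main_abstract p1 dp1 q0 q1 q2 dq0 dq1 dq2 H1 H2 H3 H4 H5 H6 H8 H9 (d / 2)). lra.
  intros x Hx Hz. assert (Rabs (x - 0) < d) by (rewrite Rminus_0_r; lra).
  specialize (Hd' x H). rewrite Hz, Rminus_0_l, Rabs_Ropp in Hd'. lra.
Qed.
Import ListNotations.

Fixpoint peval (l : list R) (x : R) : R := match l with nil => 0 | a :: l' => a + x * peval l' x end.
Fixpoint padd (l1 l2 : list R) : list R :=
  match l1, l2 with nil, _ => l2 | _, nil => l1 | a :: l1', b :: l2' => (a + b) :: padd l1' l2' end.
Fixpoint pder (l : list R) : list R := match l with nil => nil | a :: l' => padd l' (0 :: pder l') end.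

Lemma peval_padd l1 l2 x : peval (padd l1 l2) x = peval l1 x + peval l2 x.
Proof.
  revert l2; induction l1 as [|a l1 IH]; intros [|b l2]; simpl; try ring.
  rewrite IH. ring.
Qed.

Lemma peval_der l x : derivable_pt_lim (peval l) x (peval (pder l) x).
Proof.
  induction l as [|a l IH].
  - simpl. apply (D_const 0).
  - change (peval (a :: l)) with (fun t => a + t * peval l t). eapply D_eq.
    apply D_plus. apply D_const. apply D_mult. apply D_id. apply IH.
    simpl. rewrite peval_padd. simpl. ring.
Qed.

Lemma peval_cont l x : continuity_pt (peval l) x.
Proof. exact (D_cont _ _ _ (peval_der l x)). Qed.

Lemma abstract_thm' (P Q : R -> R -> R) (cp1 cq0 cq1 cq2 : list R) :
  (forall x y, P x y = - x ^ 2 * peval cp1 x + peval cp1 x * y) ->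
  (forall x y, Q x y = peval cq0 x + peval cq1 x * y + peval cq2 x * y ^ 2) ->
  peval cq0 0 = 0 -> peval cp1 0 <> 0 ->
  (forall x, peval cq1 x = 2 * x * peval cp1 x - 2 * x ^ 2 * peval cq2 x) ->
  (forall x, dgg (peval cp1) (peval (pder cp1)) (peval cq0) (peval cq1) (peval cq2)
     (peval (pder cq0)) (peval (pder cq1)) (peval (pder cq2)) x * peval cp1 x -
     (peval cq2 x + peval (pder cp1) x) * gg (peval cp1) (peval cq0) (peval cq1) (peval cq2) x = peval cp1 x) ->
  isochronous_zero_urabe P Q.
Proof.
  intros HP HQ H1 H2 H3 H4.
  replace P with (fun x y => - x ^ 2 * peval cp1 x + peval cp1 x * y)
    by (apply functional_extensionality; intro x; apply functional_extensionality; intro y; auto).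
  replace Q with (fun x y => peval cq0 x + peval cq1 x * y + peval cq2 x * y ^ 2)
    by (apply functional_extensionality; intro x; apply functional_extensionality; intro y; auto).
  apply (abstract_thm _ (peval (pder cp1)) _ _ _ (peval (pder cq0)) (peval (pder cq1)) (peval (pder cq2)));
    auto using peval_der, peval_cont.
Qed.

Lemma case_i_ur (s a1 r h : R) : s * s = 1 -> a1 * a1 = -106 + 34 * r -> r * r = 19 -> 2 * h = 1 ->
  let c := -2 + 2 * r in
  let a2 := -10 + 10 * r in let a3 := 16 - 16 * r in let a4 := -13 + 3 * r in
  let cp1 := [-1; 0; c] in
  let cq0 := [0; 1; -(s * (a1 * h)); a4; s * 4 * a1] in
  let cq1 := [0; -2; -(s * 2 * a1); a3] in
  let cq2 := [s * a1; a2] in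
  forall x, dgg (peval cp1) (peval (pder cp1)) (peval cq0) (peval cq1) (peval cq2)
     (peval (pder cq0)) (peval (pder cq1)) (peval (pder cq2)) x * peval cp1 x -
     (peval cq2 x + peval (pder cp1) x) * gg (peval cp1) (peval cq0) (peval cq1) (peval cq2) x = peval cp1 x.
Proof.
  intros Hs Ha Hr Hh c a2 a3 a4 cp1 cq0 cq1 cq2 x.
  unfold dgg, gg, cp1, cq0, cq1, cq2, c, a2, a3, a4. simpl.
  nsatz.
Qed.

Lemma case_ii_ur (a : R) :
  let cp1 := [-1; a; 15 / 8 * a ^ 2] in
  let cq0 := [0; 1; 3 * a / 4; 2; - (5 * a / 2)] in
  let cq1 := [0; -2; 3 * a; - (15 / 4 * a ^ 2)] in
  let cq2 := [- (a / 2); 15 / 4 * a ^ 2] in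
  forall x, dgg (peval cp1) (peval (pder cp1)) (peval cq0) (peval cq1) (peval cq2)
     (peval (pder cq0)) (peval (pder cq1)) (peval (pder cq2)) x * peval cp1 x -
     (peval cq2 x + peval (pder cp1) x) * gg (peval cp1) (peval cq0) (peval cq1) (peval cq2) x = peval cp1 x.
Proof.
  intros cp1 cq0 cq1 cq2 x.
  unfold dgg, gg, cp1, cq0, cq1, cq2. simpl. field.
Qed.

Lemma case_iii_ur (s a5 r k h : R) : s * s = 1 -> a5 * a5 = -77798 + 1162 * r -> r * r = 4691 ->
  35 * k = 1 -> 2 * h = 1 ->
  let a6 := (-2478 + 42 * r) * k in let a7 := (-2183 + 27 * r) * k in
  let cp1 := [-1; -(s * (2 * k) * a5); a6] in
  let cq0 := [0; 1; -(s * (3 * h * k) * a5); a7; s * (38 * k) * a5] in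
  let cq1 := [0; -2; -(s * (6 * k) * a5); -(8 * a6)] in
  let cq2 := [s * (a5 * k); 5 * a6] in
  forall x, dgg (peval cp1) (peval (pder cp1)) (peval cq0) (peval cq1) (peval cq2)
     (peval (pder cq0)) (peval (pder cq1)) (peval (pder cq2)) x * peval cp1 x -
     (peval cq2 x + peval (pder cp1) x) * gg (peval cp1) (peval cq0) (peval cq1) (peval cq2) x = peval cp1 x.
Proof.
  intros Hs Ha Hr Hk Hh a6 a7 cp1 cq0 cq1 cq2 x.
  unfold dgg, gg, cp1, cq0, cq1, cq2, a6, a7. simpl.
  nsatz.
Qed.

Theorem theorem4p2 :
  let a1 := sqrt (-106 + 34 * sqrt 19) in
  let a2 := -10 + 10 * sqrt 19 in
  let a3 := 16 - 16 * sqrt 19 in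
  let a4 := -13 + 3 * sqrt 19 in
  let a5 := sqrt (-77798 + 1162 * sqrt 4691) in
  let a6 := - (354 / 5) + 6 * sqrt 4691 / 5 in
  let a7 := - (2183 / 35) + 27 / 35 * sqrt 4691 in
  (* (i), s = 1 : upper signs, s = -1 : lower signs *)
  (forall s : R, s = 1 \/ s = -1 ->
     isochronous_zero_urabe
       (fun x y => - y + (-2 + 2 * sqrt 19) * x ^ 2 * y + x ^ 2
                   - (-2 + 2 * sqrt 19) * x ^ 4)
       (fun x y => x + s * a1 * y ^ 2 - 2 * x * y - s * (a1 / 2) * x ^ 2
                   + a2 * x * y ^ 2 - s * 2 * a1 * x ^ 2 * y + a4 * x ^ 3
                   + a3 * x ^ 3 * y + s * 4 * a1 * x ^ 4)) /\
  (* (ii) *)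
  (forall a : R,
     isochronous_zero_urabe
       (fun x y => - y + a * x * y + 15 / 8 * a ^ 2 * x ^ 2 * y + x ^ 2
                   - a * x ^ 3 - 15 / 8 * a ^ 2 * x ^ 4)
       (fun x y => x - a / 2 * y ^ 2 - 2 * x * y + 3 * a / 4 * x ^ 2
                   + 15 / 4 * a ^ 2 * x * y ^ 2 + 3 * a * x ^ 2 * y + 2 * x ^ 3
                   - 15 / 4 * a ^ 2 * x ^ 3 * y - 5 * a / 2 * x ^ 4)) /\
  (* (iii), s = 1 : upper signs, s = -1 : lower signs *)
  (forall s : R, s = 1 \/ s = -1 ->
     isochronous_zero_urabe
       (fun x y => - y - s * (2 / 35) * a5 * x * y + a6 * x ^ 2 * y + x ^ 2
                   + s * (2 / 35) * a5 * x ^ 3 - a6 * x ^ 4)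
       (fun x y => x + s * (a5 / 35) * y ^ 2 - 2 * x * y - s * (3 / 70) * a5 * x ^ 2
                   + 5 * a6 * x * y ^ 2 - s * (6 / 35) * a5 * x ^ 2 * y + a7 * x ^ 3
                   - 8 * a6 * x ^ 3 * y + s * (38 / 35) * a5 * x ^ 4)).
Proof.
  intros a1 a2 a3 a4 a5 a6 a7.
  assert (Hr19 : sqrt 19 * sqrt 19 = 19) by (apply sqrt_sqrt; lra).
  assert (Hr19p : 0 <= sqrt 19) by apply sqrt_pos.
  assert (Ha1 : a1 * a1 = -106 + 34 * sqrt 19) by (unfold a1; apply sqrt_sqrt; nra).
  assert (Hr4 : sqrt 4691 * sqrt 4691 = 4691) by (apply sqrt_sqrt; lra).
  assert (Hr4p : 0 <= sqrt 4691) by apply sqrt_pos.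
  assert (Ha5 : a5 * a5 = -77798 + 1162 * sqrt 4691) by (unfold a5; apply sqrt_sqrt; nra).
  assert (H2 : 2 * / 2 = 1) by (apply Rinv_r; lra).
  assert (H35 : 35 * / 35 = 1) by (apply Rinv_r; lra).
  split; [|split].
  - intros s Hs. assert (Hs2 : s * s = 1) by (destruct Hs; subst; ring).
    apply (abstract_thm' _ _ [-1; 0; -2 + 2 * sqrt 19] [0; 1; -(s * (a1 * / 2)); a4; s * 4 * a1]
             [0; -2; -(s * 2 * a1); a3] [s * a1; a2]).
    + intros x y. simpl. ring.
    + intros x y. simpl. unfold Rdiv. ring.
    + simpl. ring.
    + simpl. lra.
    + intro x. simpl. unfold a2, a3. ring.
    + exact (case_i_ur s a1 (sqrt 19) (/ 2) Hs2 Ha1 Hr19 H2).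
  - intros a.
    apply (abstract_thm' _ _ [-1; a; 15 / 8 * a ^ 2] [0; 1; 3 * a / 4; 2; - (5 * a / 2)]
             [0; -2; 3 * a; - (15 / 4 * a ^ 2)] [- (a / 2); 15 / 4 * a ^ 2]).
    + intros x y. simpl. field.
    + intros x y. simpl. field.
    + simpl. ring.
    + simpl. lra.
    + intro x. simpl. field.
    + exact (case_ii_ur a).
  - intros s Hs. assert (Hs2 : s * s = 1) by (destruct Hs; subst; ring).
    apply (abstract_thm' _ _
             [-1; -(s * (2 * / 35) * a5); (-2478 + 42 * sqrt 4691) * / 35]
             [0; 1; -(s * (3 * / 2 * / 35) * a5); (-2183 + 27 * sqrt 4691) * / 35; s * (38 * / 35) * a5]
             [0; -2; -(s * (6 * / 35) * a5); -(8 * ((-2478 + 42 * sqrt 4691) * / 35))]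
             [s * (a5 * / 35); 5 * ((-2478 + 42 * sqrt 4691) * / 35)]).
    + intros x y. simpl. unfold a6. field.
    + intros x y. simpl. unfold a6, a7. field.
    + simpl. ring.
    + simpl. lra.
    + intro x. simpl. ring.
    + exact (case_iii_ur s a5 (sqrt 4691) (/ 35) (/ 2) Hs2 Ha5 Hr4 H35 H2).
Qed.
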